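(* In the setting of the procedure below, the total number of arithmetic operations (divisions, multiplications and subtractions) needed to compute $K^{(N)}_{CC}$ is $O\bigl(\sum_{m=1}^M |R^*_m|\,|C^*_m|^2\bigr)$. In particular, for the $n$-cycle model ($\Delta=\{1,\dots,n\}$, $n\ge 4$, maximal cliques $\{1,2\},\{2,3\},\dots,\{n-1,n\},\{n,1\}$) and any maximal clique $C$, there is a chordal extension and a perfect sequence with $C\subseteq C^*_1$ for which $M=n-2$, $|C^*_m|=3$ and $|R^*_m|=1$ for all $m$, so $((K^{-1})_{CC})^{-1}$ is computed with $O(n)$ arithmetic operations. The procedure: given a graph $\mathcal{G}=(\Delta,E)$, $K\in\mathcal{M}^+(\mathcal{G})$, a maximal clique $C$ of $\mathcal{G}$, a chordal extension $\mathcal{G}^*$ of $\mathcal{G}$ with perfect sequence of maximal cliques $C^*_1,\dots,C^*_M$ satisfying $C\subseteq C^*_1$, $S^*_m:=C^*_m\cap(C^*_1\cup\dots\cup C^*_{m-1})$, $R^*_1:=C^*_1\setminus C$, $R^*_m:=C^*_m\setminus S^*_m$ ($m\ge2$); enumerate $\Delta\setminus C$ as $\delta_1,\dots,\delta_N$ listing $R^*_M$ first, then $R^*_{M-1}$, …, finally $R^*_1$; set $K^{(0)}=K$ and for $i=1,\dots,N$, with $\delta=\delta_i\in R^*_m$ and $Q=C^*_m\setminus\{\delta_1,\dots,\delta_i\}$, replace the $Q\times Q$ block by $K^{(i-1)}_{QQ}-(k^{(i-1)}_{\delta\delta})^{-1}K^{(i-1)}_{Q\delta}K^{(i-1)}_{\delta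 Q}$.
   Context: For a graph $\mathcal{G}=(\Delta,E)$, $\mathcal{M}^+(\mathcal{G})$ denotes the set of $|\Delta|\times|\Delta|$ real symmetric positive definite matrices $K=(k_{ij})$ with $k_{ij}=0$ whenever $i\neq j$ and $\{i,j\}\notin E$. $A_{\Delta_1\Delta_2}$ denotes the submatrix with rows in $\Delta_1$ and columns in $\Delta_2$. A chordal extension of $\mathcal{G}$ is a chordal graph on $\Delta$ containing all edges of $\mathcal{G}$. A sequence $C^*_1,\dots,C^*_M$ of all maximal cliques of a chordal graph is perfect if for each $m\ge2$ some $m'<m$ has $C^*_{m'}\supseteq C^*_m\cap(C^*_1\cup\dots\cup C^*_{m-1})$. *)

(* Defs.v *)
From HB Require Import structures.
From mathcomp Require Import all_boot all_order all_algebra.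
Set Implicit Arguments. Unset Strict Implicit. Unset Printing Implicit Defensive.
Import Order.TTheory GRing.Theory Num.Theory.

Section Defs.
Variable n : nat.
Local Notation V := 'I_n.

Definition simple_graph (e : rel V) : Prop := symmetric e /\ irreflexive e.

Definition is_clique (e : rel V) (A : {set V}) : Prop :=
  forall x y, x \in A -> y \in A -> x != y -> e x y.

Definition maxclique (e : rel V) (A : {set V}) : Prop :=
  is_clique e A /\ forall B, is_clique e B -> A \subset B -> B = A.

Definition chordal (e : rel V) : Prop :=
  forall s : seq V, uniq s -> 4 <= size s -> cycle e s ->
    exists x y, [/\ x \in s, y \in s, e x y, y != next s x & x != next s y].

Definition chordal_extension (e e' : rel V) : Prop :=
  [/\ simple_graph e', (forall x y, e x y -> e' x y) & chordal e'].

Definition clique_seq (e : rel V) (Cs : seq {set V}) : Prop :=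
  uniq Cs /\ forall A, A \in Cs <-> maxclique e A.

(* 0-indexed: C*_{m+1} = nth set0 Cs m. *)
Definition Sstar (Cs : seq {set V}) (m : nat) : {set V} :=
  nth set0 Cs m :&: \bigcup_(j < m) nth set0 Cs j.

Definition perfect (Cs : seq {set V}) : Prop :=
  forall m, 0 < m < size Cs -> exists2 m', m' < m & Sstar Cs m \subset nth set0 Cs m'.

Definition Rstar (Cs : seq {set V}) (C : {set V}) (m : nat) : {set V} :=
  if m == 0 then nth set0 Cs 0 :\: C else nth set0 Cs m :\: Sstar Cs m.

Definition block (Cs : seq {set V}) (C : {set V}) (x : V) : nat :=
  find (fun m => x \in Rstar Cs C m) (iota 0 (size Cs)).

Definition valid_enum (Cs : seq {set V}) (C : {set V}) (d : seq V) : Prop :=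
  perm_eq d (enum (~: C)) /\
  sorted (fun x y => block Cs C y <= block Cs C x) d.

Definition in_Mplus (R : realFieldType) (e : rel V) (K : 'M[R]_n) : Prop :=
  [/\ (K^T = K)%R,
      (forall x : 'cV[R]_n, x != 0%R -> (0 < (x^T *m K *m x) 0 0)%R)
    & forall i j, i != j -> ~~ e i j -> K i j = 0%R].

Definition elim_step (R : realFieldType) (K : 'M[R]_n) (dl : V) (Q : {set V})
  : 'M[R]_n :=
  \matrix_(i, j) if (i \in Q) && (j \in Q)
                 then (K i j - (K dl dl)^-1 * K i dl * K dl j)%R else K i j.

(* Arithmetic operations of one step: 1 division (k_dd^-1), |Q| multiplications
   (k_dd^-1 K_Qd), |Q|^2 multiplications (outer product), |Q|^2 subtractions. *)
Definition step_ops (Q : {set V}) : nat := 1 + #|Q| + 2 * #|Q| ^ 2.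

Fixpoint proc_rec (R : realFieldType) (Cs : seq {set V}) (C : {set V})
  (K : 'M[R]_n) (done rest : seq V) : 'M[R]_n * nat :=
  match rest with
  | [::] => (K, 0)
  | x :: r =>
      let Q := nth set0 Cs (block Cs C x) :\: [set y in rcons done x] in
      let p := proc_rec Cs C (elim_step K x Q) (rcons done x) r in
      (p.1, step_ops Q + p.2)
  end.

Definition procedure (R : realFieldType) (Cs : seq {set V}) (C : {set V})
  (K : 'M[R]_n) (d : seq V) : 'M[R]_n * nat := proc_rec Cs C K [::] d.

End Defs.

Definition cycle_graph (n : nat) : rel 'I_n :=
  fun i j => (val j == (val i).+1 %% n) || (val i == (val j).+1 %% n).
Arguments cycle_graph n : clear implicits.

(* Main.v *)
Require Import Defs.
From HB Require Import structures.
From mathcomp Require Import all_boot all_order all_algebra.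

From Stdlib Require Import Lia.
Set Implicit Arguments. Unset Strict Implicit. Unset Printing Implicit Defensive.
Definition cliqueb n (e : rel 'I_n) (A : {set 'I_n}) : bool :=
  [forall y, forall z, (y \in A) ==> (z \in A) ==> (y != z) ==> e y z].

Lemma cliquebP n (e : rel 'I_n) A : reflect (is_clique e A) (cliqueb e A).
Proof.
apply: (iffP forallP) => [H y z Hy Hz Hyz|H y].
  by move: (H y) => /forallP /(_ z); rewrite Hy Hz Hyz.
by apply/forallP => z; apply/implyP => Hy; apply/implyP => Hz; apply/implyP; apply: H.
Qed.

Lemma ex_maxclique n (e : rel 'I_n) (x : 'I_n) :
  exists2 B, maxclique e B & x \in B.
Proof.
have P0 : cliqueb e [set x] && (x \in [set x]).
  rewrite set11 andbT; apply/cliquebP => y z; rewrite !inE => /eqP -> /eqP ->.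
  by rewrite eqxx.
case: (@arg_maxnP _ _ (fun B : {set 'I_n} => cliqueb e B && (x \in B)) (fun B : {set 'I_n} => #|B|) P0) => B /andP [/cliquebP HB xB] Hmax.
exists B => //; split => // B' HB' sub.
apply/eqP; rewrite eq_sym eqEcard sub /=.
apply: Hmax; rewrite (subsetP sub) // andbT; exact/cliquebP.
Qed.

Lemma cover n (e : rel 'I_n) (Cs : seq {set 'I_n}) (C : {set 'I_n}) (x : 'I_n) : clique_seq e Cs -> x \notin C ->
  block Cs C x < size Cs /\ x \in Rstar Cs C (block Cs C x).
Proof.
move=> [_ HCs] xC.
have [B mB xB] := ex_maxclique e x.
have BCs : B \in Cs by apply/HCs.
have exP : exists m, (m < size Cs) && (x \in nth set0 Cs m).
  by exists (index B Cs); rewrite index_mem BCs nth_index.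
case: (ex_minnP exP) => m /andP [msz xm] mmin.
have hasR : has (fun m => x \in Rstar Cs C m) (iota 0 (size Cs)).
  apply/hasP; exists m; first by rewrite mem_iota.
  rewrite /Rstar; case: eqP => [m0|/eqP m0].
    by rewrite -m0 in_setD xC xm.
  rewrite in_setD xm andbT /Sstar in_setI xm /=.
  apply/bigcupP => [[j _ xj]].
  have := mmin j; rewrite (ltn_trans (ltn_ord j) msz) xj => /(_ isT).
  by rewrite leqNgt ltn_ord.
have := hasR; rewrite has_find size_iota => Hb; split => //.
have := nth_find 0 hasR; rewrite nth_iota //.
Qed.

Definition fcost n (Cs : seq {set 'I_n}) m := 1 + #|nth set0 Cs m| + 2 * #|nth set0 Cs m| ^ 2.

Lemma proc_bound (R : realFieldType) n (Cs : seq {set 'I_n}) (C : {set 'I_n}) K done rest :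
  (@proc_rec n R Cs C K done rest).2 <= \sum_(x <- rest) fcost Cs (block Cs C x).
Proof.
elim: rest K done => [|x r IH] K done /=; first by rewrite big_nil.
rewrite big_cons; apply: leq_add; last exact: IH.
rewrite /step_ops /fcost; set Q := (_ :\: _).
have h : #|Q| <= #|nth set0 Cs (block Cs C x)| by apply: subset_leq_card; apply: subsetDl.
by rewrite -addnA leq_add2l leq_add // leq_mul2l leq_exp2r ?h ?orbT.
Qed.

Lemma count_le n (d : seq 'I_n) (A : {set 'I_n}) : uniq d -> count (mem A) d <= #|A|.
Proof.
move=> ud; rewrite -size_filter cardE; apply: uniq_leq_size; first exact: filter_uniq.
by move=> x; rewrite mem_filter mem_enum => /andP [].
Qed.

Lemma part1 (R : realFieldType) n (e' : rel 'I_n) (K : 'M[R]_n) (C : {set 'I_n})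
  (Cs : seq {set 'I_n}) (d : seq 'I_n) :
  clique_seq e' Cs -> valid_enum Cs C d ->
  (procedure Cs C K d).2 <= 4 * \sum_(m < size Cs) #|Rstar Cs C m| * #|nth set0 Cs m| ^ 2.
Proof.
move=> cs [pd _].
have ud : uniq d by rewrite (perm_uniq pd) enum_uniq.
have dC x : x \in d -> x \notin C by rewrite (perm_mem pd) mem_enum inE.
rewrite /procedure; have := @proc_bound R n Cs C K [::] d => H0; apply: leq_trans H0 _.
pose g m := 4 * #|nth set0 Cs m| ^ 2.
apply: (@leq_trans (\sum_(x <- d) g (block Cs C x))).
  rewrite big_seq [X in _ <= X]big_seq; apply: leq_sum => x xd.
  have [bs xR] := cover cs (dC x xd).
  have : 0 < #|nth set0 Cs (block Cs C x)|.
    apply/card_gt0P; exists x; move: xR; rewrite /Rstar; case: eqP => [->|_];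
    by rewrite in_setD => /andP [].
  rewrite /fcost /g; set s := #|_| => s0.
  have s1 : s <= s ^ 2 by rewrite -mulnn leq_pmulr.
  have s2 : 1 <= s ^ 2 by rewrite expn_gt0 s0.
  by rewrite -[4]/(1 + 1 + 2) !mulnDl !mul1n leq_add // leq_add.
apply: (@leq_trans (\sum_(x <- d) \sum_(m < size Cs) (block Cs C x == m) * g m)).
  rewrite big_seq [X in _ <= X]big_seq; apply: leq_sum => x xd.
  have [bs xR] := cover cs (dC x xd).
  rewrite (bigD1 (Ordinal bs)) //= eqxx mul1n; exact: leq_addr.
rewrite exchange_big big_distrr /=; apply: leq_sum => m _.
rewrite -big_distrl /= /g mulnCA leq_mul2l; apply/orP; right; rewrite leq_mul2r; apply/orP; right.
have -> : \sum_(i <- d) (block Cs C i == m) = count (fun i => block Cs C i == m) d.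
  by rewrite -sum1_count [RHS]big_mkcond; apply: eq_bigr => i _; case: eqP.
apply: leq_trans (count_le (Rstar Cs C m) ud).
apply: sub_count => x /= /eqP bx.
have hasR : has (fun m => x \in Rstar Cs C m) (iota 0 (size Cs)).
  by rewrite has_find size_iota -/(block Cs C x) bx.
by have := nth_find 0 hasR; rewrite -/(block Cs C x) bx nth_iota.
Qed.
Definition offs n (a : 'I_n) (j : 'I_n) : nat := (j + (n - a)) %% n.

Definition fan n (a : 'I_n) : rel 'I_n := fun i j =>
  (i != j) && [|| offs a i == 0, offs a j == 0, offs a j == (offs a i).+1 | offs a i == (offs a j).+1].

Definition Tk n (a : 'I_n) (k : nat) : {set 'I_n} :=
  [set j | [|| offs a j == 0, offs a j == k.+1 | offs a j == k.+2]].

Definition fanCs n (a : 'I_n) : seq {set 'I_n} := mkseq (Tk a) (n - 2).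

Section Fan.
Variables (n : nat) (a : 'I_n).
Hypothesis Hn : 3 < n.

Let n_gt0 : 0 < n. Proof. exact: ltn_trans Hn. Qed.

Definition pos (k : nat) : 'I_n := Ordinal (ltn_pmod (k + a) n_gt0).

Lemma offs_lt j : offs a j < n.
Proof. exact: ltn_pmod. Qed.

Lemma offs_inj i j : offs a i = offs a j -> i = j.
Proof.
move=> /eqP; rewrite /offs eqn_modDr => /eqP.
by rewrite !modn_small // => /val_inj.
Qed.

Lemma offs_pos k : k < n -> offs a (pos k) = k.
Proof.
move=> kn; rewrite /offs /= modnDml -addnA subnKC; last exact: ltnW.
by rewrite modnDr modn_small.
Qed.

Lemma offsE j t : t < n -> (offs a j == t) = (j == pos t).
Proof.
move=> tn; apply/eqP/eqP => [h|->]; last exact: offs_pos.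
by apply: offs_inj; rewrite offs_pos.
Qed.

Lemma pos_eq t t' : t < n -> t' < n -> (pos t == pos t') = (t == t').
Proof. by move=> h h'; rewrite -offsE // offs_pos. Qed.

Lemma offs_a : offs a a = 0.
Proof. by rewrite /offs subnKC ?modnn // ltnW. Qed.

Lemma offs0 j : (offs a j == 0) = (j == a).
Proof. by apply/eqP/eqP => [h|->]; [apply: offs_inj; rewrite h offs_a | exact: offs_a]. Qed.


Definition sc (i : 'I_n) : 'I_n := Ordinal (ltn_pmod i.+1 n_gt0).

Lemma cgE i j : cycle_graph n i j = (j == sc i) || (i == sc j).
Proof. by []. Qed.

Lemma offs_sc i : offs a (sc i) = (offs a i).+1 %% n.
Proof. by rewrite /offs /= modnDml -[in RHS]addn1 modnDml addn1 addSn. Qed.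

Lemma sc_val3 i : val (sc (sc (sc i))) = (i + 3) %% n.
Proof.
have h j : val (sc j) = (j + 1) %% n by rewrite addn1.
by rewrite h h h modnDml -addnA modnDml -addnA.
Qed.

Lemma sc_neq i : sc i != i.
Proof.
apply/eqP => /(congr1 val) /= h.
have : (i + 1 == i + 0 %[mod n]) by rewrite addn1 h addn0 modn_small.
by rewrite eqn_modDl mod0n modn_small // (ltn_trans _ Hn).
Qed.

Lemma sc3_neq i : sc (sc (sc i)) != i.
Proof.
apply/eqP => /(congr1 val); rewrite sc_val3 => h.
have : (i + 3 == i + 0 %[mod n]) by rewrite h addn0 modn_small.
by rewrite eqn_modDl mod0n modn_small.
Qed.

Lemma sc_inj : injective sc.
Proof.
move=> i j /(congr1 val) /= /eqP; rewrite -[i.+1]addn1 -[j.+1]addn1 eqn_modDr !modn_small // => /eqP.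
exact: val_inj.
Qed.

Lemma offs_sca : offs a (sc a) = 1.
Proof. by rewrite offs_sc offs_a modn_small // (leq_trans _ Hn). Qed.


Lemma clique_pair C x : is_clique (cycle_graph n) C -> x \in C -> sc x \in C ->
  C = [set x; sc x].
Proof.
move=> cl xC sC; apply/setP => w; rewrite !inE; apply/idP/idP; last first.
  by case/orP => /eqP ->.
move=> wC; apply/negPn/negP; rewrite negb_or => /andP [wx wsx].
have := cl _ _ xC wC; rewrite eq_sym wx cgE (negbTE wsx) /= => /(_ isT) /eqP xw.
have := cl _ _ sC wC; rewrite eq_sym wsx cgE => /(_ isT) /orP [/eqP wE|/eqP /sc_inj xw'].
  by move: (sc3_neq x); rewrite -wE -xw eqxx.
by move: wx; rewrite xw' eqxx.
Qed.

Lemma pair_clique x : is_clique (cycle_graph n) [set x; sc x].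
Proof.
move=> y z; rewrite !inE => /orP [] /eqP -> /orP [] /eqP -> //; rewrite ?eqxx //= cgE eqxx //.
by rewrite orbT.
Qed.

Lemma cycle_maxclique C : maxclique (cycle_graph n) C -> exists x, C = [set x; sc x].
Proof.
move=> [cl mx].
case: (set_0Vmem C) => [C0|[x xC]].
  pose x0 : 'I_n := Ordinal n_gt0.
  have h : [set x0] = C.
    apply: mx; last by rewrite C0 sub0set.
    by move=> y z; rewrite !inE => /eqP -> /eqP ->; rewrite eqxx.
  by move: (set11 x0); rewrite h C0 inE.
case: (boolP (sc x \in C)) => sxC; first by exists x; apply: clique_pair.
have [w wC wx] : exists2 w, w \in C & w != x.
  case: (boolP (C \subset [set x])) => sub; last first.
    by move/subsetPn: sub => [w wC]; rewrite inE => wx; exists w.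
  have h : [set x; sc x] = C.
    apply: mx; first exact: pair_clique.
    by apply: subset_trans sub _; apply/subsetP => y; rewrite !inE => ->.
  by move: sxC; rewrite -h !inE eqxx orbT.
have := cl _ _ xC wC; rewrite eq_sym wx cgE => /(_ isT) /orP [/eqP wE|/eqP xE].
  by move: sxC; rewrite -wE wC.
by exists w; apply: clique_pair => //; rewrite -xE.
Qed.

Lemma fan_sym : symmetric (fan a).
Proof.
move=> i j; rewrite /fan eq_sym; congr (_ && _).
by case: (offs a i == 0); case: (offs a j == 0) => //=; rewrite orbC.
Qed.

Lemma fan_irr : irreflexive (fan a).
Proof. by move=> i; rewrite /fan eqxx. Qed.

Lemma fan_sc i : fan a i (sc i).
Proof.
rewrite /fan eq_sym sc_neq /= offs_sc.
have := offs_lt i; rewrite leq_eqVlt => /orP [/eqP h|lt].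
  by rewrite h modnn eqxx orbT.
by rewrite modn_small // eqxx !orbT.
Qed.

Lemma cg_fan i j : cycle_graph n i j -> fan a i j.
Proof.
rewrite cgE => /orP [] /eqP ->; first exact: fan_sc.
by rewrite fan_sym; apply: fan_sc.
Qed.


Lemma fan_nz i j : offs a i != 0 -> offs a j != 0 -> fan a i j ->
  (offs a j == (offs a i).+1) || (offs a i == (offs a j).+1).
Proof. by move=> /negbTE hi /negbTE hj /andP [_]; rewrite hi hj. Qed.

Lemma fan_a j : j != a -> fan a a j.
Proof. by move=> ja; rewrite /fan eq_sym ja offs_a eqxx. Qed.

Lemma fan_chordal : chordal (fan a).
Proof.
move=> s us ss cs.
case: (boolP (a \in s)) => aS.
  have [t rs] : exists t, rot (index a s) s = a :: t by eexists; apply: rot_index.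
  have us' : uniq (a :: t) by rewrite -rs rot_uniq.
  have ss' : 4 <= size (a :: t) by rewrite -rs size_rot.
  have ms y : (y \in s) = (y \in a :: t) by rewrite -rs mem_rot.
  have nx y : next s y = next (a :: t) y by rewrite -rs next_rot.
  move: us' ss' ms nx; clear rs; case: t => [|u [|y [|w t]]] //= us' _ ms nx.
  have ya : y != a by apply: contraTneq us' => ->; rewrite /= !inE eqxx /= ?orbT.
  have uy : u != y by apply: contraTneq us' => ->; rewrite /= !inE eqxx /= ?orbT ?andbF.
  have aw : a != w by apply: contraTneq us' => ->; rewrite /= !inE eqxx /= ?orbT ?andbF.
  have yw : y != w by apply: contraTneq us' => ->; rewrite /= !inE eqxx /= ?orbT ?andbF.
  have ua : u != a by apply: contraTneq us' => ->; rewrite /= !inE eqxx /= ?orbT ?andbF.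
  exists a, y; split.
  - exact: aS.
  - by rewrite ms !inE eqxx !orbT.
  - exact: fan_a.
  - by rewrite nx eqxx eq_sym.
  by rewrite nx (negbTE ya) [y == u]eq_sym (negbTE uy) eqxx.
exfalso.
have [z0 z0s] : exists z, z \in s by case: s ss {us cs aS} => [|z s] //= _; exists z; rewrite inE eqxx.
have [w ws wmax] : exists2 w, w \in s & forall z, z \in s -> offs a z <= offs a w.
  by case: (@arg_maxnP _ z0 [pred z | z \in s] (offs a) z0s) => w ws H; exists w.
have nz x : x \in s -> offs a x != 0.
  by move=> xs; rewrite offs0; apply: contraNneq aS => <-.
have [t rs] : exists t, rot (index w s) s = w :: t by eexists; apply: rot_index.
have us' : uniq (w :: t) by rewrite -rs rot_uniq.
have ss' : 4 <= size (w :: t) by rewrite -rs size_rot.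
have ms y : (y \in s) = (y \in w :: t) by rewrite -rs mem_rot.
have cs' : cycle (fan a) (w :: t) by rewrite -rs rot_cycle.
move: us' ss' ms cs'; clear rs; case: t => [|u [|z t]] // us' _ ms cyc.
have := cyc; rewrite /cycle rcons_path => /andP [p1 vw].
have wu : fan a w u by case/andP: p1.
rewrite /= in vw us' ms.
have vin : last z t \in z :: t by apply: mem_last.
have uout : u \notin z :: t by move: us' => /and4P [].
have uS : u \in s by rewrite ms !inE eqxx orbT.
have vs : last z t \in s by rewrite ms in_cons [_ \in u :: _]in_cons vin !orbT.
have := fan_nz (nz _ ws) (nz _ uS) wu.
rewrite eqn_leq ltnNge wmax //= andbF /= => /eqP hu.
have := fan_nz (nz _ vs) (nz _ ws) vw.
rewrite [X in _ || X]eqn_leq ltnNge wmax //= andbF orbF => /eqP hv.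
have uv : u = last z t by apply: offs_inj; apply/eqP; rewrite -eqSS -hu -hv.
by move: uout; rewrite uv vin.
Qed.


Lemma inTk j k : (j \in Tk a k) = [|| offs a j == 0, offs a j == k.+1 | offs a j == k.+2].
Proof. by rewrite inE. Qed.

Lemma clique_sub A : is_clique (fan a) A -> exists2 k, k < n - 2 & A \subset Tk a k.
Proof.
move=> cl.
case: (boolP [exists w in A, 1 < offs a w]) => [/existsP [w0 /andP [w0A w0o]]|none].
  have [w wA wmax] : exists2 w, w \in A & forall z, z \in A -> offs a z <= offs a w.
    by case: (@arg_maxnP _ w0 [pred z | z \in A] (offs a) w0A) => w ws H; exists w.
  have w1 : 1 < offs a w by apply: leq_trans w0o (wmax _ w0A).
  exists (offs a w - 2).
    by rewrite ltn_sub2r // (leq_trans _ (offs_lt w)).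
  apply/subsetP => j jA; rewrite inTk subnSK // subnSK ?(ltnW w1) // subn0.
  case: (eqVneq j w) => [->|jw]; first by rewrite eqxx !orbT.
  case: (eqVneq (offs a j) 0) => [->//|jnz].
  have wj : w != j by rewrite eq_sym.
  have wnz : offs a w != 0 by rewrite -lt0n (ltn_trans _ w1).
  have := fan_nz wnz jnz (cl _ _ wA jA wj).
  rewrite eqn_leq ltnNge wmax //= andbF /= => /eqP ->.
  by rewrite subn1 /= eqxx.
exists 0; first by rewrite subn_gt0 (ltn_trans _ Hn).
apply/subsetP => j jA; rewrite inTk.
have : offs a j <= 1.
  by rewrite leqNgt; apply: contraNN none => h; apply/existsP; exists j; rewrite jA.
by case: (offs a j) => [|[|]].
Qed.


Lemma Tk_clique k : is_clique (fan a) (Tk a k).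
Proof.
move=> x y; rewrite !inTk => hx hy xy; rewrite /fan xy /=.
case/or3P: hx => /eqP hx; case/or3P: hy => /eqP hy; rewrite hx hy ?eqxx ?orbT //=;
by case/eqP: xy; apply: offs_inj; rewrite hx hy.
Qed.

Lemma Tk_sub k k' : k < n - 2 -> Tk a k \subset Tk a k' -> k = k'.
Proof.
move=> kn /subsetP sub.
have k2 : k.+2 < n by move: kn; rewrite ltn_subRL addnC addn2.
have k1 : k.+1 < n by apply: ltnW.
have := sub (pos k.+1); rewrite !inTk offs_pos // eqxx orbT => /(_ isT).
have := sub (pos k.+2); rewrite !inTk offs_pos // eqxx !orbT => /(_ isT).
rewrite /= !eqSS => /orP [] /eqP h1 /orP [] /eqP h2; lia.
Qed.


Lemma nth_fanCs m : m < n - 2 -> nth set0 (fanCs a) m = Tk a m.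
Proof. by move=> h; rewrite nth_mkseq. Qed.

Lemma fan_clique_seq : clique_seq (fan a) (fanCs a).
Proof.
split.
  apply/mkseq_uniqP => k k' kn k'n /= e.
  by apply: Tk_sub kn _; rewrite e.
move=> A; split.
  rewrite /fanCs /mkseq => /mapP [k]; rewrite mem_iota /= => kn ->.
  split; first exact: Tk_clique.
  move=> B cB sub; have [k' k'n sub'] := clique_sub cB.
  have kk : k = k' by apply: Tk_sub kn (subset_trans sub sub').
  by apply/eqP; rewrite eqEsubset sub andbT kk.
move=> [cA mA]; have [k kn sub] := clique_sub cA.
have <- := mA _ (@Tk_clique k) sub.
by rewrite /fanCs /mkseq; apply/mapP; exists k; rewrite ?mem_iota.
Qed.


Lemma fan_perfect : perfect (fanCs a).
Proof.
move=> m; rewrite size_mkseq => /andP [m0 mn].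
case: m m0 mn => [//|m] _ mn; exists m => //.
have mn' : m < n - 2 := ltnW mn.
rewrite /Sstar !nth_mkseq //.
apply/subsetP => x; rewrite in_setI => /andP [xm /bigcupP [j _]].
rewrite nth_mkseq; last exact: ltn_trans (ltn_ord j) mn.
move: xm; rewrite !inTk.
have /ltP jm := ltn_ord j.
case/or3P => /eqP ->; rewrite ?eqxx ?orbT // => /or3P [] /eqP h; exfalso; lia.
Qed.

Lemma Tk_card k : k < n - 2 -> #|Tk a k| = 3.
Proof.
move=> kn.
have k2 : k.+2 < n by move: kn; rewrite ltn_subRL addnC addn2.
have k1 : k.+1 < n by apply: ltnW.
have -> : Tk a k = pos 0 |: (pos k.+1 |: [set pos k.+2]).
  by apply/setP => x; rewrite inTk !inE !offsE // (ltn_trans _ Hn).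
rewrite !cardsU1 cards1 !inE !pos_eq // ?(ltn_trans _ Hn) //.
by rewrite /= (ltn_eqF (ltnSn k.+1)).
Qed.


Lemma fan_Rstar m : m < n - 2 -> Rstar (fanCs a) [set a; sc a] m = [set pos m.+2].
Proof.
move=> mn.
have m2 : m.+2 < n by move: mn; rewrite ltn_subRL addnC addn2.
apply/setP => x; rewrite inE -offsE // /Rstar.
case: m mn m2 => [|m] mn m2 /=.
  rewrite in_setD nth_mkseq // inTk !inE -!offs0.
  have -> : (x == sc a) = (offs a x == 1).
    by apply/eqP/eqP => [->|h]; [exact: offs_sca | apply: offs_inj; rewrite h offs_sca].
  by case: (offs a x) => [|[|[|]]].
rewrite in_setD /Sstar in_setI nth_mkseq // inTk.
apply/idP/idP.
  case/andP => nS; case/or3P => /eqP h; rewrite ?h ?eqxx //; case/negP: nS; rewrite h eqxx ?orbT /=.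
    apply/bigcupP; exists ord0 => //; rewrite nth_mkseq ?inTk ?h //.
    by apply: leq_trans mn; rewrite ltnS.
  apply/bigcupP; exists (Ordinal (ltnSn m)) => //; rewrite nth_mkseq ?inTk ?h ?eqxx ?orbT //=.
  by apply: leq_trans mn; rewrite ltnS.
move=> /eqP h; rewrite h eqxx !orbT andbT /=; apply/bigcupP => [[j _]].
rewrite nth_mkseq ?inTk ?h; last exact: ltn_trans (ltn_ord j) mn.
have /ltP jl := ltn_ord j.
by case/or3P => /eqP; lia.
Qed.

End Fan.

Theorem mainTheorem3 :
  exists c c' : nat,
  (forall (R : realFieldType) (n : nat) (e : rel 'I_n) (K : 'M[R]_n)
     (C : {set 'I_n}) (e' : rel 'I_n) (Cs : seq {set 'I_n}) (d : seq 'I_n),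
     simple_graph e -> in_Mplus e K -> maxclique e C ->
     chordal_extension e e' -> clique_seq e' Cs -> perfect Cs ->
     C \subset nth set0 Cs 0 -> valid_enum Cs C d ->
     (procedure Cs C K d).2
       <= c * \sum_(m < size Cs) #|Rstar Cs C m| * #|nth set0 Cs m| ^ 2)
  /\
  (forall n : nat, 4 <= n -> forall C : {set 'I_n}, maxclique (cycle_graph n) C ->
     exists (e' : rel 'I_n) (Cs : seq {set 'I_n}),
       [/\ chordal_extension (cycle_graph n) e', clique_seq e' Cs, perfect Cs
          & C \subset nth set0 Cs 0] /\
       [/\ size Cs = n - 2,
           (forall m, m < size Cs -> #|nth set0 Cs m| = 3)
         & (forall m, m < size Cs -> #|Rstar Cs C m| = 1)] /\
       (forall (R : realFieldType) (K : 'M[R]_n) (d : seq 'I_n),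
          in_Mplus (cycle_graph n) K -> valid_enum Cs C d ->
          (procedure Cs C K d).2 <= c' * n)).
Proof.
exists 4, 36; split.
  move=> R n e K C e' Cs d _ _ _ _ cs _ _ ve; exact: part1 cs ve.
move=> n Hn C mC.
have [x ->] := cycle_maxclique Hn mC.
have cs := fan_clique_seq x Hn.
have Hsz : size (fanCs x) = n - 2 by rewrite size_mkseq.
have Hc : forall m, m < size (fanCs x) -> #|nth set0 (fanCs x) m| = 3.
  by move=> m; rewrite Hsz => h; rewrite nth_fanCs // Tk_card.
have Hr : forall m, m < size (fanCs x) -> #|Rstar (fanCs x) [set x; sc Hn x] m| = 1.
  by move=> m; rewrite Hsz => h; rewrite fan_Rstar // cards1.
exists (fan x), (fanCs x); split; [split|split] => //.
- split; [split; [exact: fan_sym | exact: fan_irr] | exact: cg_fan | exact: fan_chordal].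
- exact: fan_perfect.
- rewrite nth_fanCs ?subn_gt0 ?(leq_trans _ Hn) //.
  apply/subsetP => y; rewrite inTk !inE => /orP [] /eqP ->.
    by rewrite offs_a eqxx.
  by rewrite offs_sca eqxx orbT.
move=> R K d _ ve; apply: leq_trans (part1 K cs ve) _.
rewrite (eq_bigr (fun _ => 9)); last by move=> m _; rewrite Hr // Hc.
rewrite sum_nat_const card_ord Hsz mulnA.
by rewrite mulnAC -[36]/(4 * 9) leq_mul2l leq_subr orbT.
Qed.
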